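(* In the FHMA network described below, let $N_{\mathrm{opt}}$ be the integer number of sub-bands $N\ge1$ minimizing the mean local delay $D(N)$. Then $$N_{\mathrm{opt}}\in[\lfloor t_0\rfloor,\lceil t_0\rceil+2],\qquad t_0=\lambda c_d r_0^d\theta^{\delta}C(\delta)+\theta r_0^\alpha WN_0.$$
   Context: Model: transmitters form a homogeneous Poisson point process $\Phi$ of intensity $\lambda>0$ in $\mathbb{R}^d$; the typical receiver is at the origin and its desired transmitter $x_0\in\Phi$ is at distance $r_0>0$; probabilities are under the Palm distribution at $x_0$. Time is slotted. Path loss $\kappa r^{-\alpha}$ with $\alpha>d$, $\delta=d/\alpha\in(0,1)$. Power fading coefficients are i.i.d. exponential with mean $1$ over transmitters and slots, independent of everything. Unit power, always backlogged transmitters. Bandwidth $W$, noise power spectral density $N_r$, $N_0=N_r/\kappa$, SINR threshold $\theta>0$. $c_d$ is the volume of the unit ball in $\mathbb{R}^d$, $C(\delta)=\Gamma(1+\delta)\Gamma(1-\delta)=\frac{\pi\delta}{\sin(\pi\delta)}$. FHMA with $N$ sub-bands: each transmitter $x$ independently picks a sub-band $\mathcal{S}_k(x)$ uniformly from $\{1,\dots,N\}$ in each slot $k$; $\mathrm{SINR}_k=\frac{h_{k,x_0}r_0^{-\alpha}}{WN_0/N+\sum_{x\in\Phi\setminus\{x_0\}}h_{k,x}|x|^{-\alpha}\mathbf{1}(\mathcal{S}_k(x)=\mathcal{S}_k(x_0))}$; a slot is successful if $\mathrm{SINR}_k>\theta$; the local delay is the number of slots until the $N$-th successful slot and $D(N)$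 is its mean. (The mean equals $D(N)=N\exp\left(\frac{\lambda c_d r_0^d\theta^{\delta}C(\delta)}{(N-1)^{1-\delta}N^{\delta}}+\frac{\theta r_0^\alpha WN_0}{N}\right)$, with $D(1)=\infty$.) *)

(* Defs.v *)
From Stdlib Require Import Reals Lra Lia.
From Coquelicot Require Import Coquelicot.
Open Scope R_scope.

(* c_d = volume of the unit ball in R^d = pi^(d/2) / Gamma(d/2 + 1). *)
Fixpoint ball_vol (d : nat) : R :=
  match d with
  | O => 1
  | S O => 2
  | S (S k as k1) => 2 * PI / INR (S k1) * ball_vol k
  end.

(* C(delta) = Gamma(1+delta) Gamma(1-delta) = pi delta / sin(pi delta). *)
Definition Cdelta (delta : R) : R := PI * delta / sin (PI * delta).

(* Only N >= 1 is
   meaningful; N = 0 is also mapped to +infinity and excluded below. *)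
Definition mean_delay (lambda r0 theta alpha W N0 : R) (d N : nat) : Rbar :=
  let delta := INR d / alpha in
  match N with
  | O => p_infty
  | S O => p_infty
  | _ =>
    Finite (INR N *
      exp (lambda * ball_vol d * r0 ^ d * Rpower theta delta * Cdelta delta
             / (Rpower (INR N - 1) (1 - delta) * Rpower (INR N) delta)
           + theta * Rpower r0 alpha * W * N0 / INR N))
  end.

Definition is_opt_subbands (lambda r0 theta alpha W N0 : R) (d N : nat) : Prop :=
  (1 <= N)%nat /\
  forall M : nat, (1 <= M)%nat ->
    Rbar_le (mean_delay lambda r0 theta alpha W N0 d N)
            (mean_delay lambda r0 theta alpha W N0 d M).

(* Main.v *)
Require Import Defs.
From Stdlib Require Import Reals Lra Lia.
From Coquelicot Require Import Coquelicot.
Open Scope R_scope.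

Lemma exp_convex s u v : 0 <= s <= 1 ->
  exp (s * u + (1 - s) * v) <= s * exp u + (1 - s) * exp v.
Proof.
  intros Hs. set (p := s * u + (1 - s) * v).
  assert (Hu : exp u = exp p * exp (u - p)) by (rewrite <- exp_plus; f_equal; ring).
  assert (Hv : exp v = exp p * exp (v - p)) by (rewrite <- exp_plus; f_equal; ring).
  pose proof (exp_ineq1_le (u - p)). pose proof (exp_ineq1_le (v - p)).
  pose proof (exp_pos p).
  rewrite Hu, Hv.
  assert (s * (exp p * exp (u - p)) >= s * (exp p * (1 + (u - p)))).
  { apply Rle_ge, Rmult_le_compat_l; [lra|]. apply Rmult_le_compat_l; lra. }
  assert ((1-s) * (exp p * exp (v - p)) >= (1-s) * (exp p * (1 + (v - p)))).
  { apply Rle_ge, Rmult_le_compat_l; [lra|]. apply Rmult_le_compat_l; lra. }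
  assert (s * (exp p * (1 + (u - p))) + (1-s) * (exp p * (1 + (v - p))) = exp p)
    by (unfold p; ring).
  lra.
Qed.

Definition PP (dl x y : R) := Rpower x (1 - dl) * Rpower y dl.

Lemma PP_pos dl x y : 0 < PP dl x y.
Proof. unfold PP, Rpower. apply Rmult_lt_0_compat; apply exp_pos. Qed.

Lemma PP_le dl x y : 0 <= dl <= 1 -> 0 < x -> 0 < y ->
  PP dl x y <= (1 - dl) * x + dl * y.
Proof.
  intros Hd Hx Hy. unfold PP, Rpower. rewrite <- exp_plus.
  pose proof (exp_convex (1 - dl) (ln x) (ln y) ltac:(lra)).
  rewrite !exp_ln in H by assumption.
  replace (1 - (1 - dl)) with dl in H by ring. lra.
Qed.

Lemma PP_inv_le dl x y : 0 <= dl <= 1 -> 0 < x -> 0 < y ->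
  / PP dl x y <= (1 - dl) / x + dl / y.
Proof.
  intros Hd Hx Hy. unfold PP, Rpower. rewrite <- exp_plus, <- exp_Ropp.
  pose proof (exp_convex (1 - dl) (- ln x) (- ln y) ltac:(lra)).
  rewrite !exp_Ropp, !exp_ln in H by assumption.
  replace (1 - (1 - dl)) with dl in H by ring.
  replace (- ((1 - dl) * ln x + dl * ln y)) with ((1 - dl) * - ln x + dl * - ln y) by ring.
  unfold Rdiv. lra.
Qed.

Definition Ef a b dl n := a / (Rpower (n - 1) (1 - dl) * Rpower n dl) + b / n.

Lemma dec_step a b dl n : 0 <= a -> 0 <= b -> 0 <= dl <= 1 -> 2 <= n -> n + 1 <= a + b ->
  (n + 1) * exp (Ef a b dl (n + 1)) < n * exp (Ef a b dl n).
Proof.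
  intros Ha Hb Hd Hn Ht.
  assert (H1 : / (n - 1 + dl) <= / PP dl (n - 1) n).
  { apply Rinv_le_contravar. apply PP_pos.
    pose proof (PP_le dl (n-1) n Hd ltac:(lra) ltac:(lra)). lra. }
  pose proof (PP_inv_le dl n (n + 1) Hd ltac:(lra) ltac:(lra)) as H2.
  replace (n + 1 - 1) with n by ring.
  assert (Hdiff : / (n - 1 + dl) - ((1 - dl) / n + dl / (n + 1)) >= / (n * (n + 1))).
  { assert (n * (n+1) * (n - 1 + dl) > 0) by nra.
    apply Rle_ge.
    replace (/ (n - 1 + dl) - ((1 - dl) / n + dl / (n + 1)))
      with ((n + (1 - dl)^2) / (n * (n+1) * (n - 1 + dl))) by (field; lra).
    replace (/ (n * (n + 1))) with ((n - 1 + dl) / (n * (n+1) * (n - 1 + dl))) by (field; lra).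
    unfold Rdiv. apply Rmult_le_compat_r. left; apply Rinv_0_lt_compat; lra. nra. }
  assert (HE : Ef a b dl n - Ef a b dl (n + 1) >= 1 / n).
  { unfold Ef. replace (n + 1 - 1) with n by ring. fold (PP dl (n-1) n). fold (PP dl n (n+1)).
    unfold Rdiv at 1 2. 
    assert (a * / PP dl (n - 1) n - a * / PP dl n (n + 1) >= a * / (n * (n + 1))).
    { apply Rle_ge. rewrite <- Rmult_minus_distr_l. apply Rmult_le_compat_l; auto. lra. }
    assert (b / n - b / (n + 1) = b * / (n * (n+1))) by (field; lra).
    assert ((a + b) * / (n * (n+1)) >= 1 / n).
    { apply Rle_ge. replace (1 / n) with ((n+1) * / (n * (n+1))) by (field; lra).
      apply Rmult_le_compat_r; [left; apply Rinv_0_lt_compat; nra | lra]. }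
    lra. }
  set (x := Ef a b dl n - Ef a b dl (n + 1)) in *.
  replace (Ef a b dl n) with (Ef a b dl (n + 1) + x) by (unfold x; ring).
  rewrite exp_plus.
  pose proof (exp_ineq1 x ltac:(assert (1/n > 0) by (apply Rlt_gt, Rdiv_lt_0_compat; lra); lra)).
  pose proof (exp_pos (Ef a b dl (n + 1))).
  assert (n * (1 + x) >= n + 1).
  { assert (Hnx : n * x >= n * (1/n)) by (apply Rle_ge, Rmult_le_compat_l; lra).
    replace (n * (1/n)) with 1 in Hnx by (field; lra). nra. }
  set (e := exp (Ef a b dl (n + 1))) in *.
  assert (n * exp x > n * (1 + x)) by (apply Rmult_lt_compat_l; lra).
  nra.
Qed.
Lemma inc_step a b dl k : 0 <= a -> 0 <= b -> 0 <= dl <= 1 -> 2 <= k -> a + b + 2 <= k ->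
  k * exp (Ef a b dl k) < (k + 1) * exp (Ef a b dl (k + 1)).
Proof.
  intros Ha Hb Hd Hk Ht.
  pose proof (PP_inv_le dl (k - 1) k Hd ltac:(lra) ltac:(lra)) as H1.
  assert (H2 : / (k + dl) <= / PP dl k (k + 1)).
  { apply Rinv_le_contravar. apply PP_pos.
    pose proof (PP_le dl k (k+1) Hd ltac:(lra) ltac:(lra)). lra. }
  assert (Hdiff : (1 - dl) / (k - 1) + dl / k - / (k + dl) <= / (k * (k - 1))).
  { assert (k * (k-1) * (k + dl) > 0) by nra.
    replace ((1 - dl) / (k - 1) + dl / k - / (k + dl))
      with ((k - dl^2) / (k * (k-1) * (k + dl))) by (field; lra).
    replace (/ (k * (k - 1))) with ((k + dl) / (k * (k-1) * (k + dl))) by (field; lra).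
    unfold Rdiv. apply Rmult_le_compat_r. left; apply Rinv_0_lt_compat; lra. nra. }
  assert (HE : Ef a b dl k - Ef a b dl (k + 1) < / (k + 1)).
  { unfold Ef. replace (k + 1 - 1) with k by ring. fold (PP dl (k-1) k). fold (PP dl k (k+1)).
    unfold Rdiv at 1 2.
    assert (a * / PP dl (k - 1) k - a * / PP dl k (k + 1) <= a * / (k * (k - 1))).
    { rewrite <- Rmult_minus_distr_l. apply Rmult_le_compat_l; auto. lra. }
    assert (b / k - b / (k + 1) <= b * / (k * (k-1))).
    { replace (b / k - b / (k + 1)) with (b * / (k * (k+1))) by (field; lra).
      apply Rmult_le_compat_l; auto. apply Rinv_le_contravar; nra. }
    assert ((a + b) * / (k * (k-1)) < / (k + 1)).
    { assert (k * (k-1) > 0) by nra.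
      apply (Rmult_lt_reg_r (k * (k - 1) * (k+1))). nra.
      replace ((a + b) * / (k * (k - 1)) * (k * (k - 1) * (k + 1))) with ((a+b)*(k+1)) by (field; lra).
      replace (/ (k + 1) * (k * (k - 1) * (k + 1))) with (k * (k-1)) by (field; lra).
      nra. }
    lra. }
  set (x := Ef a b dl k - Ef a b dl (k + 1)) in *.
  replace (Ef a b dl k) with (Ef a b dl (k + 1) + x) by (unfold x; ring).
  rewrite exp_plus.
  pose proof (exp_ineq1_le (- x)) as Hm. rewrite exp_Ropp in Hm.
  pose proof (exp_pos x). pose proof (exp_pos (Ef a b dl (k + 1))).
  assert (Hx1 : x * (k + 1) < 1).
  { apply (Rmult_lt_compat_r (k+1)) in HE; [|lra]. rewrite Rinv_l in HE; lra. }
  assert (Hkx : k * exp x < k + 1).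
  { assert (exp x * (1 - x) <= 1).
    { apply (Rmult_le_compat_l (exp x)) in Hm; [|lra]. rewrite Rinv_r in Hm; lra. }
    nra. }
  set (e := exp (Ef a b dl (k + 1))) in *. nra.
Qed.

Lemma ball_vol_pos d : 0 < ball_vol d.
Proof.
  assert (forall d, 0 < ball_vol d /\ 0 < ball_vol (S d)).
  { induction d0 as [|d0 [IH1 IH2]]; [cbn [ball_vol]; lra|]. split; auto.
    change (ball_vol (S (S d0))) with (2 * PI / INR (S (S d0)) * ball_vol d0).
    apply Rmult_lt_0_compat; auto. apply Rdiv_lt_0_compat; [pose proof PI_RGT_0; lra|].
    apply lt_0_INR; lia. }
  apply H.
Qed.

Lemma int_step (N : nat) (z : Z) : INR N < IZR z -> INR N + 1 <= IZR z.
Proof.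
  intros H. rewrite INR_IZR_INZ in *. apply lt_IZR in H.
  rewrite <- plus_IZR. apply IZR_le. lia.
Qed.

Lemma int_step2 (N : nat) (z : Z) : IZR z < INR N -> IZR z + 1 <= INR N.
Proof.
  intros H. rewrite INR_IZR_INZ in *. apply lt_IZR in H.
  rewrite <- plus_IZR. apply IZR_le. lia.
Qed.

Lemma md_eq lambda r0 theta alpha W N0 d m :
  mean_delay lambda r0 theta alpha W N0 d (S (S m)) =
  Finite (INR (S (S m)) * exp (Ef (lambda * ball_vol d * r0 ^ d * Rpower theta (INR d / alpha) * Cdelta (INR d / alpha))
     (theta * Rpower r0 alpha * W * N0) (INR d / alpha) (INR (S (S m))))).
Proof. reflexivity. Qed.

Theorem theorem5 (d : nat) (lambda r0 theta alpha W N0 : R) (Nopt : nat) :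
  (1 <= d)%nat ->
  0 < lambda -> 0 < r0 -> 0 < theta -> INR d < alpha ->
  0 < W -> 0 < N0 ->
  is_opt_subbands lambda r0 theta alpha W N0 d Nopt ->
  let delta := INR d / alpha in
  let t0 := lambda * ball_vol d * r0 ^ d * Rpower theta delta * Cdelta delta
            + theta * Rpower r0 alpha * W * N0 in
  IZR (Zfloor t0) <= INR Nopt <= IZR (Zceil t0) + 2.
Proof.
  intros Hd Hl Hr Ht Ha HW HN [H1 Hopt] delta t0.
  assert (Hd1 : 1 <= INR d) by (apply (le_INR 1); auto).
  assert (Hdl : 0 < delta < 1).
  { unfold delta. split. apply Rdiv_lt_0_compat; lra.
    apply (Rmult_lt_reg_r alpha); [lra|]. unfold Rdiv. rewrite Rmult_assoc, Rinv_l; lra. }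
  set (a := lambda * ball_vol d * r0 ^ d * Rpower theta delta * Cdelta delta).
  set (b := theta * Rpower r0 alpha * W * N0).
  assert (Hapos : 0 <= a).
  { unfold a. left. pose proof (ball_vol_pos d). pose proof (pow_lt r0 d Hr).
    assert (0 < Rpower theta delta) by (unfold Rpower; apply exp_pos).
    assert (0 < Cdelta delta).
    { unfold Cdelta. pose proof PI_RGT_0. apply Rdiv_lt_0_compat. nra.
      apply sin_gt_0; nra. }
    repeat (apply Rmult_lt_0_compat; [|assumption]); assumption. }
  assert (Hbpos : 0 <= b).
  { unfold b. left. assert (0 < Rpower r0 alpha) by (unfold Rpower; apply exp_pos).
    repeat (apply Rmult_lt_0_compat; [|assumption]); assumption. }
  assert (Hdl' : 0 <= delta <= 1) by lra.
  destruct Nopt as [|[|m]]; [lia| |].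
  { specialize (Hopt 2%nat ltac:(lia)). simpl in Hopt. exact (False_rect _ Hopt). }
  assert (Hmd : forall k, mean_delay lambda r0 theta alpha W N0 d (S (S k)) =
     Finite (INR (S (S k)) * exp (Ef a b delta (INR (S (S k)))))) by (intros; apply md_eq).
  pose proof (Zfloor_ceil_bound t0) as [Hf Hc].
  split.
  - destruct (Rle_lt_dec (IZR (Zfloor t0)) (INR (S (S m)))) as [ok|bad]; auto.
    exfalso. apply int_step in bad.
    specialize (Hopt (S (S (S m))) ltac:(lia)).
    rewrite !Hmd in Hopt. cbn [Rbar_le] in Hopt.
    rewrite (S_INR (S (S m))) in Hopt.
    pose proof (dec_step a b delta (INR (S (S m))) Hapos Hbpos Hdl').
    assert (2 <= INR (S (S m))) by (apply (le_INR 2); lia).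
    assert (INR (S (S m)) + 1 <= a + b) by (assert (t0 = a + b) by reflexivity; lra).
    specialize (H H0 H2). lra.
  - destruct (Rle_lt_dec (INR (S (S m))) (IZR (Zceil t0) + 2)) as [ok|bad]; auto.
    exfalso.
    assert (Hb0 : 0 < b).
    { unfold b. assert (0 < Rpower r0 alpha) by (unfold Rpower; apply exp_pos).
      repeat (apply Rmult_lt_0_compat; [|assumption]); assumption. }
    assert (Ht0 : t0 = a + b) by reflexivity.
    assert (bad2 : IZR (Zceil t0 + 2) + 1 <= INR (S (S m))).
    { apply int_step2. rewrite plus_IZR; lra. }
    rewrite plus_IZR in bad2.
    destruct m as [|[|m']].
    + assert (INR 2 = 2) by (simpl; lra). lra.
    + assert (INR 3 = 3) by (simpl; lra). lra.
    + specialize (Hopt (S (S (S m'))) ltac:(lia)).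
      rewrite !Hmd in Hopt. cbn [Rbar_le] in Hopt.
      rewrite (S_INR (S (S (S m')))) in Hopt.
      pose proof (inc_step a b delta (INR (S (S (S m')))) Hapos Hbpos Hdl').
      assert (2 <= INR (S (S (S m')))) by (apply (le_INR 2); lia).
      rewrite (S_INR (S (S (S m')))) in bad2.
      assert (a + b + 2 <= INR (S (S (S m')))) by lra.
      specialize (H H0 H2). lra.
Qed.
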